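(* For every set of formulas $\Gamma$ and formula $\varphi$: $\Gamma\vdash_{\mathsf{NeL}+\{\mathrm{I2}\}}\varphi$ iff $\Gamma\models_{\mathfrak{N}_w^{\mathrm{I+}}}\varphi$, where (I2) is the rule scheme $\varphi\Rightarrow\psi^{*},\varphi\Rightarrow\psi\vdash\chi$ and $\mathfrak{N}_w^{\mathrm{I+}}$ is the class of $\mathfrak{N}_w$-models $(\mathbf A,\perp,\{\mathsf{t},\mathsf{f}\})$ such that for all $x,y,z\in A$, $x\perp y^{*}$ and $x\perp y$ imply $x=z$.
   Context: Formulas are built from a countably infinite set of variables using binary $\otimes,\circ$ and unary ${}^{*}$; $\mathbf{Fm}$ is the formula algebra. Abbreviations (also term operations): $\varphi\Rightarrow\psi:=(\varphi\circ\psi^{*})^{*}$; $\varphi\Leftrightarrow\psi:=(\varphi\Rightarrow\psi)\otimes(\psi\Rightarrow\varphi)$; $\varphi\not\Leftrightarrow\psi:=(\varphi\Leftrightarrow\psi)^{*}$; $\varphi\not\Leftrightarrow\psi\not\Leftrightarrow\chi:=((\varphi\not\Leftrightarrow\psi)\otimes(\varphi\not\Leftrightarrow\chi))\otimes(\psi\not\Leftrightarrow\chi)$. $\mathsf{NeL}$: axiom schemes (A1) $\varphi\Rightarrow\varphi$; (A2) $(\varphi\circ\psi)\Rightarrow(\psi\circ\varphi)$; (A3) $\varphi\Rightarrow\varphi^{**}$; (A4) $(\varphi\Rightarrow\psi)\Rightarrow(\varphi\circ\psi)$; (A5) $(\varphi\otimes\psi)\Leftrightarrow(\psi\otimes\varphi)$;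 (A6) $((\varphi\otimes\psi)\Rightarrow\chi)\Rightarrow((\varphi\otimes\chi^{*})\Rightarrow\psi^{*})$; (A7) $(\varphi\not\Leftrightarrow\psi\not\Leftrightarrow\chi)\Rightarrow((\varphi\Rightarrow\psi)\Rightarrow((\psi\Rightarrow\chi)\Rightarrow(\varphi\Rightarrow\chi)))$; rules on arbitrary formulas: $\varphi\Rightarrow\psi,\varphi/\psi$; $\varphi,\psi/\varphi\otimes\psi$; $\varphi\Leftrightarrow\psi,\chi/\chi'$ ($\chi'$ from $\chi$ replacing one or more occurrences of $\varphi$ by $\psi$); $\varphi\otimes\psi/\varphi$. $\mathsf{NeL}+\{\mathrm{I2}\}$ adds the rule scheme (I2). A weak $\mathcal{N}$-algebra is an algebra $(A,\otimes,\circ,{}^{*})$ of type $(2,2,1)$ with $\otimes,\circ$ commutative, $x^{**}=x$, $(x\otimes y)\circ z=(x\otimes z)\circ y$. With $\mathsf{t}\ne\mathsf{f}$ symbols not in $A$, $\overline A=A\cup\{\mathsf{t},\mathsf{f}\}$, an $\mathfrak{N}_w$-model is $(\mathbf A,\perp,\{\mathsf{t},\mathsf{f}\})$, $\mathbf A$ a weak $\mathcal{N}$-algebra, $\perp\subseteq\overline A\times\overline A$, such that for all $x,y,z\in A$: (a) $x\perp x^{*}$; (b) $x\perp y^{*}$ and $y\perp x^{*}$ imply $x=y$; (c) $x\perp y$ iff $x\circ y\perp\mathsf{t}$; (d) $x\perp\mathsf{t}$ iff $x^{*}\perp\mathsf{f}$; (e) $x\perp\mathsf{f}$ and $y\perp\mathsf{f}$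 iff $x\otimes y\perp\mathsf{f}$; (f) $(x\circ y^{*})^{*}\perp(x\circ y)^{*}$; (g) $x\perp y$ and $x\perp\mathsf{f}$ imply $y\perp\mathsf{t}$; (h) $(x\not\Leftrightarrow y\not\Leftrightarrow z)\perp((x\Rightarrow y)\Rightarrow((y\Rightarrow z)\Rightarrow(x\Rightarrow z)))^{*}$. $F_\perp=\{a\in A:a\perp\mathsf{f}\}$. For a class $K$ of such models, $\Gamma\models_K\varphi$ iff there is a finite $\Gamma'\subseteq\Gamma$ such that for every model in $K$ and every homomorphism $h:\mathbf{Fm}\to\mathbf A$, $h(\Gamma')\subseteq F_\perp$ implies $h(\varphi)\in F_\perp$. *)

(* Defs.v *)
From Stdlib Require Import List.
Import ListNotations.

Inductive fm : Type :=
| Var : nat -> fm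
| Ot  : fm -> fm -> fm
| Ci  : fm -> fm -> fm
| St  : fm -> fm.

Definition fImp (p q : fm) : fm := St (Ci p (St q)).
Definition fIff (p q : fm) : fm := Ot (fImp p q) (fImp q p).
Definition fNiff (p q : fm) : fm := St (fIff p q).
Definition fNiff3 (p q r : fm) : fm :=
  Ot (Ot (fNiff p q) (fNiff p r)) (fNiff q r).

(** [rep p q b c c']: c' is obtained from c by replacing some occurrences of
    p by q; b = true iff at least one occurrence was replaced. *)
Inductive rep (p q : fm) : bool -> fm -> fm -> Prop :=
| rep_keep : forall c, rep p q false c c
| rep_here : rep p q true p q
| rep_Ot : forall b1 b2 a a' c c',
    rep p q b1 a a' -> rep p q b2 c c' -> rep p q (b1 || b2) (Ot a c) (Ot a' c')
| rep_Ci : forall b1 b2 a a' c c',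
    rep p q b1 a a' -> rep p q b2 c c' -> rep p q (b1 || b2) (Ci a c) (Ci a' c')
| rep_St : forall b a a', rep p q b a a' -> rep p q b (St a) (St a').

Inductive NeL_axiom : fm -> Prop :=
| A1 : forall p, NeL_axiom (fImp p p)
| A2 : forall p q, NeL_axiom (fImp (Ci p q) (Ci q p))
| A3 : forall p, NeL_axiom (fImp p (St (St p)))
| A4 : forall p q, NeL_axiom (fImp (fImp p q) (Ci p q))
| A5 : forall p q, NeL_axiom (fIff (Ot p q) (Ot q p))
| A6 : forall p q r,
    NeL_axiom (fImp (fImp (Ot p q) r) (fImp (Ot p (St r)) (St q)))
| A7 : forall p q r,
    NeL_axiom (fImp (fNiff3 p q r)
                 (fImp (fImp p q) (fImp (fImp q r) (fImp p r)))).

Inductive derI2 (Gamma : fm -> Prop) : fm -> Prop :=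
| d_hyp : forall p, Gamma p -> derI2 Gamma p
| d_ax : forall p, NeL_axiom p -> derI2 Gamma p
| d_mp : forall p q, derI2 Gamma (fImp p q) -> derI2 Gamma p -> derI2 Gamma q
| d_adj : forall p q, derI2 Gamma p -> derI2 Gamma q -> derI2 Gamma (Ot p q)
| d_repl : forall p q c c', derI2 Gamma (fIff p q) -> derI2 Gamma c ->
    rep p q true c c' -> derI2 Gamma c'
| d_simp : forall p q, derI2 Gamma (Ot p q) -> derI2 Gamma p
| d_I2 : forall p q r, derI2 Gamma (fImp p (St q)) -> derI2 Gamma (fImp p q) ->
    derI2 Gamma r.

Inductive ext (A : Type) : Type :=
| El : A -> ext A
| Tt : ext A
| Ff : ext A.
Arguments El {A} _.
Arguments Tt {A}.
Arguments Ff {A}.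

Section Ops.
Context {A : Type} (ot ci : A -> A -> A) (st : A -> A).
Definition aImp (x y : A) : A := st (ci x (st y)).
Definition aIff (x y : A) : A := ot (aImp x y) (aImp y x).
Definition aNiff (x y : A) : A := st (aIff x y).
Definition aNiff3 (x y z : A) : A := ot (ot (aNiff x y) (aNiff x z)) (aNiff y z).
End Ops.

Record NwModel : Type := {
  car : Type;
  mot : car -> car -> car;
  mci : car -> car -> car;
  mst : car -> car;
  perp : ext car -> ext car -> Prop;
  ot_comm : forall x y, mot x y = mot y x;
  ci_comm : forall x y, mci x y = mci y x;
  st_inv : forall x, mst (mst x) = x;
  ot_ci : forall x y z, mci (mot x y) z = mci (mot x z) y;
  c_a : forall x, perp (El x) (El (mst x));
  c_b : forall x y, perp (El x) (El (mst y)) -> perp (El y) (El (mst x)) -> x = y;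
  c_c : forall x y, perp (El x) (El y) <-> perp (El (mci x y)) Tt;
  c_d : forall x, perp (El x) Tt <-> perp (El (mst x)) Ff;
  c_e : forall x y, (perp (El x) Ff /\ perp (El y) Ff) <-> perp (El (mot x y)) Ff;
  c_f : forall x y, perp (El (mst (mci x (mst y)))) (El (mst (mci x y)));
  c_g : forall x y, perp (El x) (El y) -> perp (El x) Ff -> perp (El y) Tt;
  c_h : forall x y z,
    perp (El (aNiff3 mot mci mst x y z))
         (El (mst (aImp mci mst (aImp mci mst x y)
                     (aImp mci mst (aImp mci mst y z) (aImp mci mst x z)))))
}.


Definition designated (M : NwModel) (a : car M) : Prop := perp M (El a) Ff.

Definition is_hom (M : NwModel) (h : fm -> car M) : Prop :=
  (forall p q, h (Ot p q) = mot M (h p) (h q)) /\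
  (forall p q, h (Ci p q) = mci M (h p) (h q)) /\
  (forall p, h (St p) = mst M (h p)).

Definition Iplus (M : NwModel) : Prop :=
  forall x y z : car M,
    perp M (El x) (El (mst M y)) -> perp M (El x) (El y) -> x = z.

Definition sem_conseq (K : NwModel -> Prop) (Gamma : fm -> Prop) (p : fm) : Prop :=
  exists G' : list fm, (forall g, In g G' -> Gamma g) /\
    forall M : NwModel, K M -> forall h : fm -> car M, is_hom M h ->
      (forall g, In g G' -> designated M (h g)) -> designated M (h p).

(* Main.v *)
Require Import Defs.
From Stdlib Require Import List Bool ClassicalEpsilon FunctionalExtensionality PropExtensionality ProofIrrelevance.
Import ListNotations.

Ltac hexp H1 H2 H3 :=
  unfold fNiff3, fNiff, fIff, fImp in *;
  repeat (rewrite H1 || rewrite H2 || rewrite H3).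

Lemma des_imp (M : NwModel) (a b : car M) :
  designated M (mst M (mci M a (mst M b))) <-> perp M (El a) (El (mst M b)).
Proof.
  unfold designated. rewrite <- c_d. rewrite <- c_c. tauto.
Qed.

Lemma rep_hom (M : NwModel) h p q b c c' :
  is_hom M h -> h p = h q -> rep p q b c c' -> h c = h c'.
Proof.
  intros [H1 [H2 H3]] E R; induction R; auto.
  - rewrite !H1; congruence.
  - rewrite !H2; congruence.
  - rewrite !H3; congruence.
Qed.

Lemma ax_valid (M : NwModel) h p :
  is_hom M h -> NeL_axiom p -> designated M (h p).
Proof.
  intros Hh Ax. pose proof Hh as [H1 [H2 H3]].
  destruct Ax; hexp H1 H2 H3; try apply des_imp.
  - apply c_a.
  - rewrite (ci_comm M (h q) (h p)). apply c_a.
  - rewrite st_inv. apply c_a.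
  - apply c_f.
  - unfold designated; apply c_e; split; apply des_imp;
      rewrite ?(ot_comm M (h q) (h p)); apply c_a.
  - rewrite !st_inv. rewrite ot_ci.
    set (w := mci M (mot M (h p) (mst M (h r))) (h q)).
    pose proof (c_a M (mst M w)) as K. rewrite st_inv in K. exact K.
  - pose proof (c_h M (h p) (h q) (h r)) as K.
    unfold aNiff3, aNiff, aIff, aImp in K. exact K.
Qed.

Lemma soundness Gamma p : derI2 Gamma p ->
  exists G' : list fm, (forall g, In g G' -> Gamma g) /\
    forall M : NwModel, Iplus M -> forall h : fm -> car M, is_hom M h ->
      (forall g, In g G' -> designated M (h g)) -> designated M (h p).
Proof.
  induction 1.
  - exists [p]. split.
    + intros g [<-|[]]; auto.
    + intros M _ h _ Hg. apply Hg. left; auto.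
  - exists []. split. intros g []. intros M _ h Hh _. apply ax_valid; auto.
  - destruct IHderI2_1 as [G1 [S1 V1]]. destruct IHderI2_2 as [G2 [S2 V2]].
    exists (G1 ++ G2). split.
    + intros g Hg; apply in_app_or in Hg; destruct Hg; auto.
    + intros M HI h Hh Hg.
      assert (A1 : designated M (h (fImp p q))) by (apply V1; auto; intros; apply Hg; apply in_or_app; auto).
      assert (A2 : designated M (h p)) by (apply V2; auto; intros; apply Hg; apply in_or_app; auto).
      destruct Hh as [H1 [H2 H3]]. unfold fImp in A1. repeat (rewrite H2 in A1 || rewrite H3 in A1).
      apply des_imp in A1. pose proof (c_g M _ _ A1 A2) as K.
      apply c_d in K. rewrite st_inv in K. exact K.
  - destruct IHderI2_1 as [G1 [S1 V1]]. destruct IHderI2_2 as [G2 [S2 V2]].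
    exists (G1 ++ G2). split.
    + intros g Hg; apply in_app_or in Hg; destruct Hg; auto.
    + intros M HI h Hh Hg.
      assert (A1 : designated M (h p)) by (apply V1; auto; intros; apply Hg; apply in_or_app; auto).
      assert (A2 : designated M (h q)) by (apply V2; auto; intros; apply Hg; apply in_or_app; auto).
      pose proof Hh as [H1 [H2 H3]]. unfold designated. rewrite H1. apply c_e; auto.
  - destruct IHderI2_1 as [G1 [S1 V1]]. destruct IHderI2_2 as [G2 [S2 V2]].
    exists (G1 ++ G2). split.
    + intros g Hg; apply in_app_or in Hg; destruct Hg; auto.
    + intros M HI h Hh Hg.
      assert (A1 : designated M (h (fIff p q))) by (apply V1; auto; intros; apply Hg; apply in_or_app; auto).
      assert (A2 : designated M (h c)) by (apply V2; auto; intros; apply Hg; apply in_or_app; auto).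
      pose proof Hh as [K1 [K2 K3]]. unfold fIff, fImp in A1. repeat (rewrite K1 in A1 || rewrite K2 in A1 || rewrite K3 in A1).
      unfold designated in A1; apply c_e in A1. destruct A1 as [B1 B2].
      apply des_imp in B1. apply des_imp in B2.
      pose proof (c_b M _ _ B1 B2) as E.
      rewrite <- (rep_hom M h p q true c c' Hh E H1). exact A2.
  - destruct IHderI2 as [G1 [S1 V1]]. exists G1. split; auto.
    intros M HI h Hh Hg. pose proof (V1 M HI h Hh Hg) as K.
    pose proof Hh as [H1 [H2 H3]]. unfold designated in *. rewrite H1 in K.
    apply c_e in K. tauto.
  - destruct IHderI2_1 as [G1 [S1 V1]]. destruct IHderI2_2 as [G2 [S2 V2]].
    exists (G1 ++ G2). split.
    + intros g Hg; apply in_app_or in Hg; destruct Hg; auto.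
    + intros M HI h Hh Hg.
      assert (A1 : designated M (h (fImp p (St q)))) by (apply V1; auto; intros; apply Hg; apply in_or_app; auto).
      assert (A2 : designated M (h (fImp p q))) by (apply V2; auto; intros; apply Hg; apply in_or_app; auto).
      pose proof Hh as [H1 [H2 H3]]. unfold fImp in A1, A2. repeat (rewrite H2 in A1 || rewrite H3 in A1); repeat (rewrite H2 in A2 || rewrite H3 in A2).
      pose proof A2 as A2'.
      apply des_imp in A1. apply des_imp in A2. rewrite st_inv in A1.
      pose proof (HI _ _ (h r) A2 A1) as E1.
      pose proof (HI _ _ (mst M (mci M (h p) (mst M (h q)))) A2 A1) as E2.
      rewrite <- E1, E2. exact A2'.
Qed.

Lemma rep_false p q b c c' : rep p q b c c' -> b = false -> c = c'.
Proof.
  induction 1; intros E; auto; try discriminate.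
  - apply orb_false_iff in E; destruct E; f_equal; auto.
  - apply orb_false_iff in E; destruct E; f_equal; auto.
  - f_equal; auto.
Qed.

Lemma d_refl G p : derI2 G (fIff p p).
Proof. apply d_adj; apply d_ax; apply A1. Qed.

Lemma d_sym G p q : derI2 G (fIff p q) -> derI2 G (fIff q p).
Proof.
  intro H. eapply d_repl; [exact H | apply (d_refl G p) |].
  unfold fIff, fImp.
  exact (rep_Ot p q true true _ _ _ _
     (rep_St _ _ _ _ _ (rep_Ci _ _ true false _ _ _ _ (rep_here _ _) (rep_St _ _ _ _ _ (rep_keep _ _ _)))) 
     (rep_St _ _ _ _ _ (rep_Ci _ _ false true _ _ _ _ (rep_keep _ _ _) (rep_St _ _ _ _ _ (rep_here _ _))))).
Qed.

Lemma d_trans G p q r : derI2 G (fIff p q) -> derI2 G (fIff q r) -> derI2 G (fIff p r).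
Proof.
  intros H K. eapply d_repl; [exact K | exact H |].
  unfold fIff, fImp.
  exact (rep_Ot q r true true _ _ _ _
     (rep_St _ _ _ _ _ (rep_Ci _ _ false true _ _ _ _ (rep_keep _ _ _) (rep_St _ _ _ _ _ (rep_here _ _)))) 
     (rep_St _ _ _ _ _ (rep_Ci _ _ true false _ _ _ _ (rep_here _ _) (rep_St _ _ _ _ _ (rep_keep _ _ _))))).
Qed.

Lemma d_cong G p q b c c' : derI2 G (fIff p q) -> rep p q b c c' -> derI2 G (fIff c c').
Proof.
  intros H R. destruct b.
  - eapply d_repl; [exact H | apply (d_refl G c) |].
    unfold fIff, fImp.
    exact (rep_Ot p q true true _ _ _ _
     (rep_St _ _ _ _ _ (rep_Ci _ _ false true _ _ _ _ (rep_keep _ _ _) (rep_St _ _ _ _ _ R)))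
     (rep_St _ _ _ _ _ (rep_Ci _ _ true false _ _ _ _ R (rep_St _ _ _ _ _ (rep_keep _ _ _))))).
  - rewrite <- (rep_false _ _ _ _ _ R eq_refl). apply d_refl.
Qed.

Lemma d_transport G p q : derI2 G (fIff p q) -> derI2 G p -> derI2 G q.
Proof. intros H K. eapply d_repl; [exact H | exact K | apply rep_here]. Qed.

Lemma d_simp2 G p q : derI2 G (Ot p q) -> derI2 G q.
Proof.
  intro H. apply (d_simp G q p). eapply d_repl; [apply d_ax; apply A5 | exact H | apply rep_here].
Qed.

Definition eqv G p q := derI2 G (fIff p q).
Definition Q G := {P : fm -> Prop | exists p, P = eqv G p}.
Definition cls G p : Q G := exist _ (eqv G p) (ex_intro _ p eq_refl).

Lemma cls_eq G p q : derI2 G (fIff p q) -> cls G p = cls G q.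
Proof.
  intro H. unfold cls.
  assert (E : eqv G p = eqv G q).
  { apply functional_extensionality; intro r; apply propositional_extensionality.
    unfold eqv; split; intro K.
    - apply (d_trans _ _ p); auto. apply d_sym; auto.
    - apply (d_trans _ _ q); auto. }
  generalize (ex_intro (fun p0 => eqv G p = eqv G p0) p eq_refl).
  generalize (ex_intro (fun p0 => eqv G q = eqv G p0) q eq_refl).
  rewrite E. intros e1 e2. f_equal. apply proof_irrelevance.
Qed.

Lemma cls_inv G p q : cls G p = cls G q -> derI2 G (fIff p q).
Proof.
  intro H. apply (f_equal (@proj1_sig _ _)) in H. simpl in H.
  change (eqv G p q). rewrite H. apply d_refl.
Qed.

Definition repr G (x : Q G) : fm :=
  proj1_sig (constructive_indefinite_description _ (proj2_sig x)).

Lemma cls_repr G x : cls G (repr G x) = x.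
Proof.
  unfold repr. destruct (constructive_indefinite_description _ _) as [p Hp]. simpl.
  destruct x as [P HP]. simpl in Hp. subst P. unfold cls. f_equal. apply proof_irrelevance.
Qed.

Lemma repr_cls G p : derI2 G (fIff (repr G (cls G p)) p).
Proof. apply cls_inv. apply cls_repr. Qed.

Lemma cls_surj G (x : Q G) : exists p, x = cls G p.
Proof. exists (repr G x). symmetry; apply cls_repr. Qed.

Definition qot G x y := cls G (Ot (repr G x) (repr G y)).
Definition qci G x y := cls G (Ci (repr G x) (repr G y)).
Definition qst G x := cls G (St (repr G x)).

Lemma cong2 G (F : fm -> fm -> fm) p p' q q' :
  (forall a a' b, rep p p' true a a' -> rep p p' false b b -> rep p p' true (F a b) (F a' b)) ->
  (forall a b b', rep q q' false a a -> rep q q' true b b' -> rep q q' true (F a b) (F a b')) ->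
  derI2 G (fIff p p') -> derI2 G (fIff q q') -> derI2 G (fIff (F p q) (F p' q')).
Proof.
  intros R1 R2 H K. apply (d_trans _ _ (F p' q)).
  - eapply d_cong; [exact H | apply R1; constructor].
  - eapply d_cong; [exact K | apply R2; constructor].
Qed.

Lemma cls_Ot G p q : cls G (Ot p q) = qot G (cls G p) (cls G q).
Proof.
  unfold qot. apply cls_eq. apply d_sym.
  apply cong2; try apply repr_cls.
  - intros; exact (rep_Ot _ _ true false _ _ _ _ H H0).
  - intros; exact (rep_Ot _ _ false true _ _ _ _ H H0).
Qed.

Lemma cls_Ci G p q : cls G (Ci p q) = qci G (cls G p) (cls G q).
Proof.
  unfold qci. apply cls_eq. apply d_sym.
  apply cong2; try apply repr_cls.
  - intros; exact (rep_Ci _ _ true false _ _ _ _ H H0).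
  - intros; exact (rep_Ci _ _ false true _ _ _ _ H H0).
Qed.

Lemma cls_St G p : cls G (St p) = qst G (cls G p).
Proof.
  unfold qst. apply cls_eq. apply d_sym.
  eapply d_cong; [apply repr_cls | apply rep_St; apply rep_here].
Qed.

Ltac clsexp := unfold fNiff3, fNiff, fIff, fImp in *;
  repeat (rewrite cls_Ot || rewrite cls_Ci || rewrite cls_St).

Definition Dc G (x : Q G) := derI2 G (repr G x).

Lemma Dc_cls G p : Dc G (cls G p) <-> derI2 G p.
Proof.
  unfold Dc. split; intro H.
  - eapply d_transport; [apply repr_cls | exact H].
  - eapply d_transport; [apply d_sym; apply repr_cls | exact H].
Qed.

Lemma D_cls G p q : cls G p = cls G q -> derI2 G p -> derI2 G q.
Proof. intros E H. apply Dc_cls. rewrite <- E. apply Dc_cls. auto. Qed.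

Lemma q_ot_comm G x y : qot G x y = qot G y x.
Proof.
  destruct (cls_surj G x) as [p ->]; destruct (cls_surj G y) as [q ->].
  rewrite <- !cls_Ot. apply cls_eq. apply d_ax. apply A5.
Qed.

Lemma q_ci_comm G x y : qci G x y = qci G y x.
Proof.
  destruct (cls_surj G x) as [p ->]; destruct (cls_surj G y) as [q ->].
  rewrite <- !cls_Ci. apply cls_eq. apply d_adj; apply d_ax; apply A2.
Qed.

Lemma q_st_inv G x : qst G (qst G x) = x.
Proof.
  destruct (cls_surj G x) as [p ->].
  rewrite <- !cls_St. apply cls_eq. apply d_adj.
  - apply (D_cls G (fImp (St p) (St p))); [| apply d_ax; apply A1].
    clsexp. f_equal. apply q_ci_comm.
  - apply d_ax; apply A3.
Qed.

Lemma q_ot_ci G x y z : qci G (qot G x y) z = qci G (qot G x z) y.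
Proof.
  destruct (cls_surj G x) as [a ->]; destruct (cls_surj G y) as [b ->];
  destruct (cls_surj G z) as [d ->].
  assert (K : forall b d, derI2 G (fImp (St (Ci (Ot a b) d)) (St (Ci (Ot a d) b)))).
  { intros b0 d0. apply (D_cls G (fImp (fImp (Ot a b0) (St d0)) (fImp (Ot a (St (St d0))) (St b0))));
      [| apply d_ax; apply A6].
    clsexp. rewrite !q_st_inv. reflexivity. }
  assert (E : cls G (St (Ci (Ot a b) d)) = cls G (St (Ci (Ot a d) b))).
  { apply cls_eq. apply d_adj; apply K. }
  rewrite !cls_St in E. apply (f_equal (qst G)) in E. rewrite !q_st_inv in E.
  rewrite !cls_Ci, !cls_Ot in E. exact E.
Qed.

Definition perpQ G (a b : ext (Q G)) : Prop :=
  match a, b with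
  | El x, El y => Dc G (qst G (qci G x y))
  | El x, Tt => Dc G (qst G x)
  | El x, Ff => Dc G x
  | _, _ => False
  end.

Ltac surj3 G := repeat match goal with
  | x : Q G |- _ => let p := fresh "p" in destruct (cls_surj G x) as [p ->]; clear x
  end.

Ltac qnorm := repeat (rewrite <- cls_Ot || rewrite <- cls_Ci || rewrite <- cls_St).

Lemma pc_a G x : perpQ G (El x) (El (qst G x)).
Proof. simpl. surj3 G. qnorm. apply Dc_cls. apply d_ax. apply A1. Qed.

Lemma pc_b G x y : perpQ G (El x) (El (qst G y)) -> perpQ G (El y) (El (qst G x)) -> x = y.
Proof.
  simpl. surj3 G. qnorm. rewrite !Dc_cls. intros H K. apply cls_eq. apply d_adj; auto.
Qed.

Lemma pc_c G x y : perpQ G (El x) (El y) <-> perpQ G (El (qci G x y)) Tt.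
Proof. simpl. tauto. Qed.

Lemma pc_d G x : perpQ G (El x) Tt <-> perpQ G (El (qst G x)) Ff.
Proof. simpl. tauto. Qed.

Lemma pc_e G x y : (perpQ G (El x) Ff /\ perpQ G (El y) Ff) <-> perpQ G (El (qot G x y)) Ff.
Proof.
  simpl. surj3 G. qnorm. rewrite !Dc_cls. split.
  - intros [H K]; apply d_adj; auto.
  - intro H; split; [eapply d_simp; exact H | eapply d_simp2; exact H].
Qed.

Lemma pc_f G x y : perpQ G (El (qst G (qci G x (qst G y)))) (El (qst G (qci G x y))).
Proof. simpl. surj3 G. qnorm. apply Dc_cls. apply d_ax. apply A4. Qed.

Lemma pc_g G x y : perpQ G (El x) (El y) -> perpQ G (El x) Ff -> perpQ G (El y) Tt.
Proof.
  simpl. surj3 G. qnorm. rewrite !Dc_cls. intros H K.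
  eapply d_mp; [| exact K].
  eapply D_cls; [| exact H].
  unfold fImp. rewrite !cls_St, !cls_Ci, !cls_St, q_st_inv. reflexivity.
Qed.

Lemma pc_h G x y z :
  perpQ G (El (aNiff3 (qot G) (qci G) (qst G) x y z))
         (El (qst G (aImp (qci G) (qst G) (aImp (qci G) (qst G) x y)
                     (aImp (qci G) (qst G) (aImp (qci G) (qst G) y z) (aImp (qci G) (qst G) x z))))).
Proof.
  simpl. surj3 G. unfold aNiff3, aNiff, aIff, aImp. qnorm. apply Dc_cls.
  apply d_ax. apply A7.
Qed.

Definition CM G : NwModel :=
  {| car := Q G; mot := qot G; mci := qci G; mst := qst G; perp := perpQ G;
     ot_comm := q_ot_comm G; ci_comm := q_ci_comm G; st_inv := q_st_inv G;
     ot_ci := q_ot_ci G; c_a := pc_a G; c_b := pc_b G; c_c := pc_c G;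
     c_d := pc_d G; c_e := pc_e G; c_f := pc_f G; c_g := pc_g G; c_h := pc_h G |}.

Lemma CM_Iplus G : Iplus (CM G).
Proof.
  unfold Iplus. simpl. intros x y z. surj3 G. qnorm. rewrite !Dc_cls. intros H K.
  apply cls_eq. eapply d_I2; [| exact H].
  eapply D_cls; [| exact K].
  unfold fImp. rewrite !cls_St, !cls_Ci, !cls_St, q_st_inv. reflexivity.
Qed.

Lemma CM_hom G : is_hom (CM G) (cls G).
Proof. split; [|split]; intros; simpl; [apply cls_Ot | apply cls_Ci | apply cls_St]. Qed.

Lemma completeness G p : sem_conseq Iplus G p -> derI2 G p.
Proof.
  intros [G' [S V]].
  pose proof (V (CM G) (CM_Iplus G) (cls G) (CM_hom G)) as K.
  unfold designated in K. simpl in K. apply Dc_cls. apply K.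
  intros g Hg. simpl. apply Dc_cls. apply d_hyp. auto.
Qed.

Theorem theorem5p5 : forall (Gamma : fm -> Prop) (phi : fm),
  derI2 Gamma phi <-> sem_conseq Iplus Gamma phi.
Proof.
  intros Gamma phi. split.
  - intro H. exact (soundness Gamma phi H).
  - apply completeness.
Qed.
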